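(* Let $n\in\mathbb{N}$ and let $k$ be an integer with $0\le k\le n-1$. Then $$|PF_{n+1,k}| = \sum_{i=0}^{n} \binom{n}{i}\, \min\big((i+1)+k,\; n+1\big)\, |PF_{i,k}|\,(n-i+1)^{n-i-1},$$ with the convention $|PF_{0,k}|=1$.
   Context: For $n\in\mathbb{N}=\{1,2,\dots\}$ let $[n]=\{1,\dots,n\}$. A parking preference of length $n$ is a tuple $\alpha=(a_1,\dots,a_n)\in[n]^n$; let $PP_n=[n]^n$. For an integer $k\ge 0$, the $k$-Naples parking rule is as follows. There are $n$ parking spots numbered $1,\dots,n$ from west to east, initially empty, and cars $c_1,\dots,c_n$ arrive in this order; car $c_i$ has preferred spot $a_i$. If spot $a_i$ is empty, $c_i$ parks there. Otherwise $c_i$ checks the spots $a_i-1,a_i-2,\dots,a_i-k$, in this order, skipping any that are $<1$, and parks in the first empty one among them. If all these spots are occupied (or there are none), $c_i$ drives east and parks in the first empty spot with number greater than $a_i$; if there is no such spot, $c_i$ fails to park. $\alpha$ is a $k$-Naples parking function of length $n$ if every car parks. $PF_{n,k}$ denotes the set of $k$-Naples parking functions of length $n$ (defined for every integer $k\ge 0$). For $k=0$ this is the classical parking rule, and $PF_{n,0}=PF_n$ is the set of classical parking functions. *)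

(* Defs.v *)
From mathcomp Require Import all_boot.
Set Implicit Arguments. Unset Strict Implicit. Unset Printing Implicit Defensive.

(* Parking spots are numbered 1..n.  [occ] is the list of occupied spots.
   [park_car n k occ a] returns the spot where a car with preference [a]
   parks under the k-Naples rule, or None if it fails. *)
Definition park_car (n k : nat) (occ : seq nat) (a : nat) : option nat :=
  if a \notin occ then Some a else
  (* spots a-1, a-2, ..., a-k that are >= 1, in this order *)
  let back := [seq s <- [seq a - j | j <- iota 1 k & j < a] | 1 <= s] in
  match [seq s <- back | s \notin occ] with
  | s :: _ => Some s
  | [::] =>
    match [seq s <- iota a.+1 (n - a) | s \notin occ] with
    | s :: _ => Some s
    | [::] => None
    end
  end.

Fixpoint park_all (n k : nat) (occ : seq nat) (prefs : seq nat) : option (seq nat) :=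
  match prefs with
  | [::] => Some occ
  | a :: prefs' =>
    match park_car n k occ a with
    | Some s => park_all n k (s :: occ) prefs'
    | None => None
    end
  end.

(* A parking preference of length n: alpha : 'I_n -> 'I_n, where car c_(i+1)
   prefers spot (alpha i) + 1 in [n]. *)
Definition is_naples_pf (n k : nat) (alpha : {ffun 'I_n -> 'I_n}) : bool :=
  park_all n k [::] [seq (alpha i).+1 | i <- enum 'I_n] != None.

Definition PF (n k : nat) : {set {ffun 'I_n -> 'I_n}} :=
  [set alpha | is_naples_pf k alpha].

(* Main.v *)
Require Import Defs.
From mathcomp Require Import all_boot.
From mathcomp Require Import zify.
Set Implicit Arguments. Unset Strict Implicit. Unset Printing Implicit Defensive.


Fixpoint wcnt (A : seq nat) (L : nat) (f : seq nat -> nat) : nat :=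
  match L with
  | 0 => f [::]
  | L'.+1 => \sum_(a <- A) wcnt A L' (fun w => f (a :: w))
  end.

Lemma wcnt_ext A L f g :
  (forall w, all (fun x => x \in A) w -> size w = L -> f w = g w) ->
  wcnt A L f = wcnt A L g.
Proof.
elim: L f g => [|L IH] f g H /=; first by apply: H.
apply: eq_big_seq => a aA; apply: IH => w Hw Hs; apply: H => /=; rewrite ?aA ?Hs //.
Qed.

Lemma wcnt_sum (E : seq nat) A L (g : nat -> seq nat -> nat) :
  wcnt A L (fun w => \sum_(e <- E) g e w) = \sum_(e <- E) wcnt A L (g e).
Proof.
elim: L g => [|L IH] g //=.
rewrite (eq_bigr _ (fun a _ => IH (fun e w => g e (a :: w)))).
by rewrite exchange_big.
Qed.

Lemma wcnt_mull A L c f : wcnt A L (fun w => c * f w) = c * wcnt A L f.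
Proof.
elim: L f => [|L IH] f //=.
rewrite big_distrr /=; apply: eq_bigr => a _; exact: IH.
Qed.

Lemma wcnt_rcons A L f :
  wcnt A L.+1 f = wcnt A L (fun w => \sum_(a <- A) f (rcons w a)).
Proof.
elim: L f => [|L IH] f; first by [].
change (\sum_(a <- A) wcnt A L.+1 (fun w => f (a :: w)) =
  \sum_(a <- A) wcnt A L (fun w => \sum_(b <- A) f (rcons (a :: w) b))).
apply: eq_bigr => a _; exact: IH.
Qed.

Lemma wcnt_map (g : nat -> nat) A L f :
  wcnt (map g A) L f = wcnt A L (fun w => f (map g w)).
Proof.
elim: L f => [|L IH] f //=.
rewrite big_map; apply: eq_bigr => a _; exact: IH.
Qed.

Lemma wcnt_perm A B L f : perm_eq A B -> wcnt A L f = wcnt B L f.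
Proof.
move=> pAB; elim: L f => [|L IH] f //=.
rewrite (perm_big _ pAB) /=; apply: eq_bigr => a _; exact: IH.
Qed.

Lemma wcnt_const1 A L : wcnt A L (fun _ => 1) = size A ^ L.
Proof.
elim: L => [|L IH] //=.
rewrite (eq_bigr _ (fun a _ => IH)) big_const_seq count_predT iter_addn_0.
by rewrite expnS mulnC.
Qed.

Lemma wcnt_const0 A L : wcnt A L (fun _ => 0) = 0.
Proof. elim: L => [|L IH] //=; exact: big1. Qed.

Lemma wcnt_zero A L f :
  (forall w, all (fun x => x \in A) w -> size w = L -> f w = 0) -> wcnt A L f = 0.
Proof. by move=> H; rewrite (wcnt_ext (g := fun _ => 0)) ?wcnt_const0. Qed.

Lemma wcnt_sub (p : pred nat) A L f :
  (forall w, all (fun x => x \in A) w -> size w = L -> f w != 0 -> all p w) ->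
  wcnt A L f = wcnt [seq x <- A | p x] L f.
Proof.
elim: L f => [|L IH] f H //=.
rewrite big_filter [in RHS]big_mkcond /=; apply: eq_big_seq => a aA.
case pa: (p a).
  apply: IH => w Hw Hs Hf.
  by move: (H (a :: w)); rewrite /= aA Hw Hs => /(_ isT erefl Hf) /andP[].
apply: wcnt_zero => w Hw Hs; apply/eqP; apply: (contraFT _ pa) => Hf.
by move: (H (a :: w)); rewrite /= aA Hw Hs => /(_ isT erefl Hf) /andP[].
Qed.

Lemma pascal_conv (c1 c2 : nat -> nat) L :
  \sum_(i < L.+1) 'C(L, i) * c1 i.+1 * c2 (L - i) +
  \sum_(i < L.+1) 'C(L, i) * c1 i * c2 (L.+1 - i) =
  \sum_(i < L.+2) 'C(L.+1, i) * c1 i * c2 (L.+1 - i).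
Proof.
rewrite [in RHS]big_ord_recl.
rewrite [X in _ = _ + X](eq_bigr (fun i : 'I_L.+1 => 'C(L, i) * c1 i.+1 * c2 (L - i)
                    + 'C(L, i.+1) * c1 i.+1 * c2 (L - i))); last first.
  move=> i _; rewrite /= /bump /= ?add1n binS subSS; lia.
rewrite big_split /= [X in _ = _ + (_ + X)]big_ord_recr /= (bin_small (ltnSn L)).
rewrite [X in _ + X = _]big_ord_recl /=.
rewrite [X in _ + (_ + X) = _](eq_bigr (fun i : 'I_L => 'C(L, i.+1) * c1 i.+1 * c2 (L - i))); last first.
  by move=> i _; rewrite /= /bump /= ?add1n subSS.
rewrite !bin0 subn0; lia.
Qed.

Lemma wcnt_shuffle A1 A2 L (f1 f2 : seq nat -> nat) :
  (forall x, x \in A1 -> x \notin A2) ->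
  wcnt (A1 ++ A2) L
    (fun w => f1 [seq x <- w | x \in A1] * f2 [seq x <- w | x \in A2]) =
  \sum_(i < L.+1) 'C(L, i) * wcnt A1 i f1 * wcnt A2 (L - i) f2.
Proof.
move=> D; elim: L f1 f2 => [|L IH] f1 f2.
  by rewrite big_ord1 /= mul1n.
rewrite /= big_cat /=.
rewrite (eq_big_seq (fun a => \sum_(i < L.+1) 'C(L, i) * wcnt A1 i (fun w => f1 (a :: w))
             * wcnt A2 (L - i) f2)); last first.
  move=> a aA1; rewrite -IH; apply: wcnt_ext => w _ _ /=.
  by rewrite aA1 (negbTE (D _ aA1)).
rewrite [X in X + _ = _](eq_big_seq (fun a => \sum_(i < L.+1) 'C(L, i) * wcnt A1 i (fun w => f1 (a :: w))
             * wcnt A2 (L - i) f2)) //.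
rewrite [X in _ + X = _](eq_big_seq (fun a => \sum_(i < L.+1) 'C(L, i) * wcnt A1 i f1
             * wcnt A2 (L - i) (fun w => f2 (a :: w)))); last first.
  move=> a aA2; rewrite -IH; apply: wcnt_ext => w _ _ /=.
  have aA1 : a \notin A1 by apply/negP => /D; rewrite aA2.
  by rewrite aA2 (negbTE aA1).
rewrite [X in X + _ = _]exchange_big [X in _ + X = _]exchange_big /=.
rewrite -(pascal_conv (fun i => wcnt A1 i f1) (fun j => wcnt A2 j f2)).
congr (_ + _); apply: eq_bigr => i _.
  by rewrite -!big_distrl -big_distrr.
rewrite -big_distrr subSn; last by rewrite -ltnS.
by [].
Qed.


Definition ffree (occ s : seq nat) : option nat := ohead [seq x <- s | x \notin occ].

Lemma ffree_cons occ x s :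
  ffree occ (x :: s) = if x \in occ then ffree occ s else Some x.
Proof. by rewrite /ffree /=; case: (x \in occ). Qed.

Lemma ffree_cat occ s1 s2 :
  ffree occ (s1 ++ s2) = if ffree occ s1 is Some y then Some y else ffree occ s2.
Proof. by elim: s1 => //= x s1 IH; rewrite !ffree_cons; case: (x \in occ). Qed.

Lemma ffree_split occ s1 x s2 :
  x \notin occ -> ffree occ (s1 ++ x :: s2) = Some (odflt x (ffree occ s1)).
Proof. by move=> H; rewrite ffree_cat ffree_cons (negbTE H); case: ffree. Qed.

Lemma ffreeP occ s y : ffree occ s = Some y -> (y \in s) && (y \notin occ).
Proof.
elim: s => //= x s IH; rewrite ffree_cons in_cons.
case: ifP => [xo /IH /andP[-> ->]|xo [<-]]; first by rewrite orbT.
by rewrite eqxx xo.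
Qed.

Lemma ffree_None occ s : (ffree occ s == None) = all (fun x => x \in occ) s.
Proof. by elim: s => //= x s IH; rewrite ffree_cons; case: ifP. Qed.

Lemma ffree_agree occ occ' s :
  (forall x, x \in s -> (x \in occ) = (x \in occ')) -> ffree occ s = ffree occ' s.
Proof.
elim: s => //= x s IH H; rewrite !ffree_cons H ?mem_head // IH // => y ys.
by apply: H; rewrite in_cons ys orbT.
Qed.

Lemma mem_map_in (P : pred nat) (g : nat -> nat) occ x :
  {in P &, injective g} -> all P occ -> P x -> (g x \in map g occ) = (x \in occ).
Proof.
move=> inj aP Px; apply/mapP/idP => [[y yo /inj]|xo]; last by exists x.
by move=> -> //; apply: (allP aP).
Qed.

Lemma ffree_map (P : pred nat) g occ s :
  {in P &, injective g} -> all P occ -> all P s ->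
  ffree (map g occ) (map g s) = omap g (ffree occ s).
Proof.
move=> inj aP; elim: s => //= x s IH /andP[Px Ps].
by rewrite !ffree_cons (mem_map_in inj aP Px); case: ifP => // _; apply: IH.
Qed.

Definition lback (a k : nat) := [seq s <- [seq a - j | j <- iota 1 k & j < a] | 1 <= s].

Lemma park_carE n k occ a :
  park_car n k occ a =
  if a \notin occ then Some a else
  if ffree occ (lback a k) is Some s then Some s else ffree occ (iota a.+1 (n - a)).
Proof.
rewrite /park_car /ffree /lback; case: (a \notin occ) => //.
by case: [seq s <- _ | s \notin occ].
Qed.

Lemma filter_iota_lt c s k : [seq j <- iota s k | j < c] = iota s (minn k (c - s)).
Proof.
elim: k s => [|k IH] s /=; first by rewrite min0n.
case: ifP => H; rewrite IH.
  have -> : minn k.+1 (c - s) = (minn k (c - s.+1)).+1 by lia.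
  by [].
have -> : minn k.+1 (c - s) = 0 by lia.
have -> : minn k (c - s.+1) = 0 by lia.
by [].
Qed.

Lemma lback_eq a k : lback a k = [seq a - j | j <- iota 1 (minn k (a - 1))].
Proof.
rewrite /lback filter_map /= filter_iota_lt.
congr map; apply/all_filterP/allP => j; rewrite mem_iota /=; lia.
Qed.

Lemma mem_lback a k x : (x \in lback a k) = (0 < x < a) && (a - x <= k).
Proof.
rewrite lback_eq; apply/mapP/idP => [[j]|H].
  rewrite mem_iota => Hj ->; lia.
exists (a - x); last by lia.
rewrite mem_iota; lia.
Qed.

Lemma park_car_range n k occ a s :
  0 < a <= n -> park_car n k occ a = Some s -> (0 < s <= n) && (s \notin occ).
Proof.
move=> Ha; rewrite park_carE; case: ifP => [H [<-]|_]; first by rewrite Ha.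
case E: ffree => [y|].
  move=> [<-]; move/ffreeP: E => /andP[]; rewrite mem_lback => H1 ->; lia.
move/ffreeP => /andP[]; rewrite mem_iota => H1 ->; lia.
Qed.

Lemma run_rcons n k occ w a :
  park_all n k occ (rcons w a) =
  if park_all n k occ w is Some o then
    (if park_car n k o a is Some s then Some (s :: o) else None)
  else None.
Proof.
elim: w occ => [|x w IH] occ /=; first by case: park_car.
by case: park_car => // s; rewrite IH.
Qed.

Lemma run_props n k occ w o :
  uniq occ -> all (fun x => 0 < x <= n) w -> park_all n k occ w = Some o ->
  [/\ uniq o, size o = size w + size occ &
      forall x, x \in o -> (x \in occ) || (0 < x <= n)].
Proof.
elim: w occ => [|a w IH] occ /= Uo; first by move=> _ [<-]; split=> // x ->.
move=> /andP[Ha Hw]; case E: park_car => [s|] // R.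
have /andP[Hs so] := park_car_range Ha E.
have U0 : uniq (s :: occ) by rewrite /= so Uo.
have [U Sz Hx] := IH (s :: occ) U0 Hw R.
split => //; first by rewrite Sz /= addnS.
move=> x /Hx; rewrite in_cons; case/orP => [/orP[/eqP->|->]|->]; rewrite ?Hs ?orbT //.
Qed.

Lemma run_mono n k occ w o x :
  x \in occ -> park_all n k occ w = Some o -> x \in o.
Proof.
elim: w occ => [|a w IH] occ /= xo; first by case=> <-.
case: park_car => // s; apply: IH; by rewrite in_cons xo orbT.
Qed.

Lemma run_pref n k occ w o a :
  a \in w -> park_all n k occ w = Some o -> a \in o.
Proof.
elim: w occ => [|b w IH] occ //=; rewrite in_cons => /orP[/eqP<-|aw].
  case E: park_car => [s|] // R.
  case ao: (a \in occ); first by apply: run_mono R; rewrite in_cons ao orbT.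
  by move: E; rewrite park_carE ao /= => -[Es]; apply: run_mono R; rewrite Es mem_head.
by case: park_car => // s; apply: IH.
Qed.

Lemma park_car_eqi n k occ occ' a :
  occ =i occ' -> park_car n k occ a = park_car n k occ' a.
Proof.
move=> H; rewrite !park_carE H.
by rewrite (ffree_agree (occ' := occ') (s := lback a k)) //
           (ffree_agree (occ' := occ') (s := iota _ _)).
Qed.

Definition okE n k e occ w :=
  if park_all n k occ w is Some o then e \notin o else false.

Lemma okE_eqi n k e occ occ' w :
  occ =i occ' -> okE n k e occ w = okE n k e occ' w.
Proof.
rewrite /okE; elim: w occ occ' => [|a w IH] occ occ' H /=; first by rewrite H.
rewrite (park_car_eqi _ _ _ H); case: park_car => // s.
by apply: IH => x; rewrite !in_cons H.
Qed.

Lemma okE_mem n k e occ w : e \in occ -> okE n k e occ w = false.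
Proof.
rewrite /okE => H; case E: park_all => [o|] //.
by rewrite (run_mono H E).
Qed.


Lemma sum_bool_count (P : pred nat) s : \sum_(x <- s) (P x : nat) = count P s.
Proof. by elim: s => [|x s IH]; rewrite ?big_nil ?big_cons //= IH. Qed.

Lemma count_le_iota c n : count (fun a => a <= c) (iota 1 n) = minn c n.
Proof.
elim: n => [|n IH]; first by rewrite minn0.
rewrite -(addn1 n) iotaD count_cat IH /= add1n addn0; case: leqP; lia.
Qed.

Lemma last_car n k o e0 a :
  (forall x, (x \in o) = (0 < x <= n) && (x != e0)) -> 0 < e0 <= n -> 0 < a <= n ->
  (park_car n k o a != None) = (a <= e0 + k).
Proof.
move=> H He Ha; rewrite park_carE H.
case: (eqVneq a e0) => [->|ne]; first by rewrite /= andbF /=; lia.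
rewrite Ha /=.
case Eb: ffree => [y|].
  move/ffreeP: Eb; rewrite mem_lback H => /andP[] H1 H2.
  have ye : y = e0 by move: H2; rewrite negb_and negbK; case/orP => [|/eqP//]; lia.
  by subst y; rewrite /=; symmetry; lia.
have nb : ~~ ((0 < e0 < a) && (a - e0 <= k)).
  apply/negP => Hb; move/eqP: Eb; rewrite ffree_None => /allP /(_ e0).
  by rewrite mem_lback Hb H eqxx andbF => /(_ isT).
apply/idP/idP.
  case Ef: ffree => [y|] // _; move/ffreeP: Ef; rewrite H mem_iota => /andP[H1 H2].
  have ye : y = e0 by move: H2; rewrite negb_and negbK; case/orP => [|/eqP//]; lia.
  subst y; lia.
move=> lt; apply/eqP => /eqP; rewrite ffree_None => /allP /(_ e0).
rewrite mem_iota H eqxx andbF.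
have -> : a.+1 <= e0 < a.+1 + (n - a) by move: nb; rewrite negb_and; lia.
by move/(_ isT).
Qed.

Lemma beta_sum n k b : all (fun x => 0 < x <= n.+1) b -> size b = n ->
  \sum_(a <- iota 1 n.+1) (park_all n.+1 k [::] (rcons b a) != None : nat) =
  \sum_(e <- iota 1 n.+1) okE n.+1 k e [::] b * minn (e + k) n.+1.
Proof.
move=> Hb Sb; rewrite /okE.
under eq_bigr do rewrite run_rcons.
case E: park_all => [o|]; last by rewrite !big1.
have [Uo So Ro] := run_props (isT : uniq [::]) Hb E.
rewrite /= in Ro; rewrite Sb addn0 in So.
set F := [seq x <- iota 1 n.+1 | x \notin o].
have SF : size F = 1.
  have Hp : perm_eq [seq x <- iota 1 n.+1 | x \in o] o.
    apply: uniq_perm; rewrite ?filter_uniq ?iota_uniq //.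
    move=> x; rewrite mem_filter mem_iota; apply/andP/idP => [[]//|xo].
    by split=> //; move: (Ro x xo); lia.
  have := count_predC (fun x => x \in o) (iota 1 n.+1).
  rewrite -!size_filter (perm_size Hp) So size_iota.
  by move=> h; apply/eqP; rewrite -(eqn_add2l n) addn1 -h.
case EF: F SF => [|e0 [|]] // _.
have mF x : (x \in F) = (0 < x <= n.+1) && (x \notin o).
  by rewrite /F mem_filter mem_iota andbC; congr (_ && _); lia.
have He0 : (0 < e0 <= n.+1) && (e0 \notin o) by rewrite -mF EF mem_head.
have Ho x : (x \in o) = (0 < x <= n.+1) && (x != e0).
  have := mF x; rewrite EF inE.
  case xo: (x \in o); rewrite /= ?andbF ?andbT => h.
    by rewrite (Ro x xo) h.
  by rewrite h andbN.
rewrite (eq_big_seq (fun a => (a <= e0 + k) : nat)); last first.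
  move=> a; rewrite mem_iota => Ha.
  rewrite -(last_car k Ho); first by case: park_car.
    by case/andP: He0.
  lia.
rewrite sum_bool_count count_le_iota.
rewrite (eq_bigr (fun e => if e \notin o then minn (e + k) n.+1 else 0)); last first.
  by move=> e _; case: (e \notin o); rewrite ?mul1n ?mul0n.
by rewrite -big_mkcond -big_filter -/F EF big_seq1.
Qed.


Lemma iota_split m x n : m <= x < m + n ->
  iota m n = iota m (x - m) ++ x :: iota x.+1 (m + n - x.+1).
Proof.
move=> H; have E : n = (x - m) + (m + n - x.+1).+1 by lia.
rewrite {1}E iotaD.
have -> : m + (x - m) = x by lia.
by [].
Qed.

Lemma okE_cons n k e occ a w :
  okE n k e occ (a :: w) =
  if park_car n k occ a is Some s then okE n k e (s :: occ) w else false.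
Proof. by rewrite /okE /=; case: park_car. Qed.

Lemma okE_head n k e (occ w : seq nat) : okE n k e (e :: occ) w = false.
Proof. by rewrite okE_mem // mem_head. Qed.

Lemma park_car_left n k e occ occ' a :
  a < e -> e <= n -> e \notin occ -> e \notin occ' ->
  (forall x, x < e -> (x \in occ) = (x \in occ')) ->
  park_car n k occ a = park_car n k occ' a.
Proof.
move=> ae en eo eo' H; rewrite !park_carE H //.
rewrite (ffree_agree (occ' := occ') (s := lback a k)); last first.
  by move=> x; rewrite mem_lback => Hx; apply: H; lia.
case: ffree => // .
rewrite (iota_split (x := e)); last by lia.
rewrite !ffree_split //; case: ifP => // _; do 2 f_equal; apply: ffree_agree => x.
rewrite mem_iota => Hx; apply: H; lia.
Qed.

Lemma park_car_right n k e occ occ' a :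
  e < a -> e \notin occ -> e \notin occ' ->
  (forall x, e < x -> (x \in occ) = (x \in occ')) ->
  park_car n k occ a = park_car n k occ' a.
Proof.
move=> ea eo eo' H; rewrite !park_carE H //.
have -> : ffree occ (lback a k) = ffree occ' (lback a k).
  rewrite lback_eq; case: (leqP (a - e) (minn k (a - 1))) => Hle.
    rewrite (iota_split (x := a - e)); last by lia.
    rewrite map_cat /= (_ : a - (a - e) = e); last by lia.
    rewrite !ffree_split //; do 2 f_equal; apply: ffree_agree => x.
    by case/mapP => j; rewrite mem_iota => Hj ->; apply: H; lia.
  apply: ffree_agree => x.
  by case/mapP => j; rewrite mem_iota => Hj ->; apply: H; lia.
case: ifP => // _; case: ffree => //; apply: ffree_agree => x; rewrite mem_iota => Hx; apply: H; lia.
Qed.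

Lemma park_car_le n k e occ a s :
  0 < a < e -> e <= n -> e \notin occ -> park_car n k occ a = Some s -> s <= e.
Proof.
move=> ae en eo.
have Hag : forall x, x < e -> (x \in occ) = (x \in occ ++ iota e.+1 n).
  by move=> x xe; rewrite mem_cat mem_iota; case: (x \in occ) => //=; lia.
have eo' : e \notin occ ++ iota e.+1 n.
  by rewrite mem_cat mem_iota negb_or eo /=; lia.
have ae' : a < e by lia.
rewrite (@park_car_left n k e occ (occ ++ iota e.+1 n) a ae' en eo eo' Hag).
move/park_car_range; rewrite (_ : 0 < a <= n); last by lia.
move=> /(_ isT) /andP[Hs]; rewrite mem_cat mem_iota negb_or => /andP[_].
lia.
Qed.

Lemma park_car_ge n k e occ a s :
  e < a <= n -> e \notin occ -> park_car n k occ a = Some s -> e <= s.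
Proof.
move=> ae eo.
have Hag : forall x, e < x -> (x \in occ) = (x \in occ ++ iota 0 e).
  by move=> x xe; rewrite mem_cat mem_iota; case: (x \in occ) => //=; lia.
have eo' : e \notin occ ++ iota 0 e.
  by rewrite mem_cat mem_iota negb_or eo /=; lia.
have ae' : e < a by lia.
rewrite (@park_car_right n k e occ (occ ++ iota 0 e) a ae' eo eo' Hag).
move/park_car_range; rewrite (_ : 0 < a <= n); last by lia.
move=> /(_ isT) /andP[Hs]; rewrite mem_cat mem_iota negb_or => /andP[_].
lia.
Qed.

Lemma split_sim n k e o1 o2 occ w :
  0 < e <= n -> all (fun x => x < e) o1 -> all (fun x => e < x) o2 ->
  occ =i o1 ++ o2 -> all (fun x => (0 < x <= n) && (x != e)) w ->
  okE n k e occ w =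
  okE n k e o1 [seq x <- w | x < e] && okE n k e o2 [seq x <- w | e < x].
Proof.
move=> He; elim: w o1 o2 occ => [|a w IH] o1 o2 occ H1 H2 Ho.
  move=> _; rewrite /okE /= Ho mem_cat.
  have -> : (e \in o1) = false by apply/negP => /(allP H1); rewrite ltnn.
  have -> : (e \in o2) = false by apply/negP => /(allP H2); rewrite ltnn.
  by [].
move=> /= /andP[/andP[Ha ae] Hw].
have eo1 : e \notin o1 by apply/negP => /(allP H1); rewrite ltnn.
have eo2 : e \notin o2 by apply/negP => /(allP H2); rewrite ltnn.
have eo : e \notin occ by rewrite Ho mem_cat negb_or eo1 eo2.
case: (ltngtP a e) => [lt|gt|eq]; last by rewrite eq eqxx in ae.
- rewrite /=.
  rewrite !okE_cons (@park_car_left n k e occ o1) //; last first.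
  + move=> x xe; rewrite Ho mem_cat.
    have -> : (x \in o2) = false by apply/negP => /(allP H2); lia.
    by rewrite orbF.
  + by case/andP: He.
  case E: park_car => [s|] //.
  have se : s <= e by apply: (@park_car_le n k e o1 a s) => //; lia.
  case: (ltngtP s e) => [slt|sgt|sq].
  + apply: IH => //; first by rewrite /= slt H1.
    by move=> x; rewrite !in_cons Ho mem_cat orbA.
  + lia.
  + by rewrite sq !okE_head.
- rewrite /=.
  rewrite !okE_cons (@park_car_right n k e occ o2) //; last first.
    move=> x xe; rewrite Ho mem_cat.
    have -> : (x \in o1) = false by apply/negP => /(allP H1); lia.
    by [].
  case E: park_car => [s|]; last by rewrite andbF.
  have se : e <= s by apply: (@park_car_ge n k e o2 a s) => //; lia.
  case: (ltngtP s e) => [slt|sgt|sq].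
  + lia.
  + apply: IH => //; first by rewrite /= sgt H2.
    by move=> x; rewrite !in_cons Ho !mem_cat !in_cons; case: (x == s); rewrite ?orbT.
  + by rewrite sq !okE_head andbF.
Qed.

Lemma park_car_trunc n k e occ a :
  a < e -> e <= n -> e \notin occ ->
  park_car n k occ a = if park_car e.-1 k occ a is Some s then Some s else Some e.
Proof.
move=> ae en eo; rewrite !park_carE; case: ifP => // _.
case: ffree => // .
rewrite (iota_split (x := e)); last by lia.
rewrite ffree_split // (_ : e - a.+1 = e.-1 - a); last by lia.
by case: ffree.
Qed.

Lemma left_trunc n k e occ u :
  0 < e <= n -> e \notin occ -> all (fun x => 0 < x < e) u ->
  okE n k e occ u = (park_all e.-1 k occ u != None).
Proof.
move=> He; elim: u occ => [|a u IH] occ eo; first by rewrite /okE /= eo.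
move=> /= /andP[Ha Hu]; rewrite /= okE_cons (@park_car_trunc n k e) //; last 2 first.
- lia.
- by case/andP: He.
case E: park_car => [s|]; last by rewrite okE_mem ?mem_head.
have Ha' : 0 < a <= e.-1 by lia.
have /andP[Hs _] := park_car_range Ha' E.
apply: IH => //; last by rewrite in_cons negb_or eo andbT; apply/eqP => se; lia.
Qed.


Definition cback (m k a : nat) := [seq (a + m.+1 * k - j) %% m.+1 | j <- iota 1 k].
Definition cfwd (m a : nat) := [seq (a + j) %% m.+1 | j <- iota 1 m].
Definition cpark (m k : nat) (occ : seq nat) (a : nat) : option nat :=
  if a \notin occ then Some a else
  if ffree occ (cback m k a) is Some s then Some s else ffree occ (cfwd m a).
Fixpoint crun (m k : nat) (occ : seq nat) (w : seq nat) : option (seq nat) :=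
  match w with
  | [::] => Some occ
  | a :: w' => if cpark m k occ a is Some s then crun m k (s :: occ) w' else None
  end.
Definition cok m k r occ w := if crun m k occ w is Some o then r \notin o else false.

Lemma cpark_range m k occ a s :
  a < m.+1 -> cpark m k occ a = Some s -> (s < m.+1) && (s \notin occ).
Proof.
rewrite /cpark => Ha; case: ifP => [H [<-]|_]; first by rewrite Ha.
case E: ffree => [y|].
  move=> [<-]; move/ffreeP: E => /andP[/mapP[j _ ->] ->]; by rewrite ltn_pmod.
by move/ffreeP => /andP[/mapP[j _ ->] ->]; rewrite ltn_pmod.
Qed.

Lemma crun_props m k occ w o :
  uniq occ -> all (fun x => x < m.+1) w -> crun m k occ w = Some o ->
  [/\ uniq o, size o = size w + size occ &
      forall x, x \in o -> (x \in occ) || (x < m.+1)].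
Proof.
elim: w occ => [|a w IH] occ /= Uo; first by move=> _ [<-]; split=> // x ->.
move=> /andP[Ha Hw]; case E: cpark => [s|] // R.
have /andP[Hs so] := cpark_range Ha E.
have U0 : uniq (s :: occ) by rewrite /= so Uo.
have [U Sz Hx] := IH (s :: occ) U0 Hw R.
split => //; first by rewrite Sz /= addnS.
move=> x /Hx; rewrite in_cons; case/orP => [/orP[/eqP->|->]|->]; rewrite ?Hs ?orbT //.
Qed.

Lemma crun_mono m k occ w o x :
  x \in occ -> crun m k occ w = Some o -> x \in o.
Proof.
elim: w occ => [|a w IH] occ /= xo; first by case=> <-.
case: cpark => // s; apply: IH; by rewrite in_cons xo orbT.
Qed.

Lemma crun_pref m k occ w o a :
  a \in w -> crun m k occ w = Some o -> a \in o.
Proof.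
elim: w occ => [|b w IH] occ //=; rewrite in_cons => /orP[/eqP<-|aw].
  case E: cpark => [s|] // R.
  case ao: (a \in occ); first by apply: crun_mono R; rewrite in_cons ao orbT.
  by move: E; rewrite /cpark ao /= => -[Es]; apply: crun_mono R; rewrite Es mem_head.
by case: cpark => // s; apply: IH.
Qed.

Lemma cok_head m k r (occ w : seq nat) : cok m k r (r :: occ) w = false.
Proof.
rewrite /cok; case E: crun => [o|] //.
by rewrite (crun_mono (mem_head r occ) E).
Qed.

Lemma cpark_total m k (occ : seq nat) a :
  uniq occ -> all (fun x => x < m.+1) occ -> size occ < m.+1 -> a < m.+1 ->
  cpark m k occ a != None.
Proof.
move=> Uo Ao So Ha; rewrite /cpark; case: ifP => // ao.
case: ffree => // .
apply/eqP => /eqP; rewrite ffree_None => /allP Hf.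
have Hsub : {subset iota 0 m.+1 <= occ}.
  move=> x; rewrite mem_iota add0n => Hx.
  case: (ltngtP a x) => [ax|xa|<-]; last by rewrite (negbFE ao).
  - apply: Hf; apply/mapP; exists (x - a); first by rewrite mem_iota; lia.
    rewrite (_ : a + (x - a) = x) ?modn_small //; lia.
  - apply: Hf; apply/mapP; exists (x + m.+1 - a); first by rewrite mem_iota; lia.
    rewrite (_ : a + (x + m.+1 - a) = x + m.+1); last by lia.
    by rewrite modnDr modn_small.
have := uniq_leq_size (iota_uniq 0 m.+1) Hsub; rewrite size_iota => H.
by rewrite ltnNge H in So.
Qed.

Lemma crun_total m k (occ w : seq nat) :
  uniq occ -> all (fun x => x < m.+1) occ -> all (fun x => x < m.+1) w ->
  size occ + size w <= m -> crun m k occ w != None.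
Proof.
elim: w occ => [|a w IH] occ //= Uo Ao /andP[Ha Hw] Sz.
have So : size occ < m.+1 by lia.
have := cpark_total k Uo Ao So Ha.
case E: cpark => [s|] // _; have /andP[Hs so] := cpark_range Ha E.
apply: IH => //=; [by rewrite so | by rewrite Hs | lia].
Qed.


Definition rot (m r x : nat) := (x + r) %% m.+1.

Lemma rot_inj m r : {in (fun x => x < m.+1) &, injective (rot m r)}.
Proof.
move=> x y Hx Hy /eqP; rewrite /rot eqn_modDr !modn_small //; exact/eqP.
Qed.

Lemma modA3 d x y z : ((x %% d + y) %% d + z) %% d = (x + y + z) %% d.
Proof. by rewrite modnDml -addnA modnDml addnA. Qed.

Lemma cback_rot m k r a :
  cback m k (rot m r a) = map (rot m r) (cback m k a).
Proof.
rewrite /cback -map_comp; apply/eq_in_map => j; rewrite mem_iota => Hj /=.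
have hj : j <= m.+1 * k by rewrite mulSn; lia.
rewrite /rot -addnBA // modnDml modnDml; congr (_ %% _); lia.
Qed.

Lemma cfwd_rot m r a :
  cfwd m (rot m r a) = map (rot m r) (cfwd m a).
Proof.
rewrite /cfwd -map_comp; apply/eq_in_map => j _ /=.
rewrite /rot modnDml modnDml; congr (_ %% _); lia.
Qed.

Lemma all_cback m k a : all (fun x => x < m.+1) (cback m k a).
Proof. by apply/allP => x /mapP[j _ ->]; rewrite ltn_pmod. Qed.

Lemma all_cfwd m a : all (fun x => x < m.+1) (cfwd m a).
Proof. by apply/allP => x /mapP[j _ ->]; rewrite ltn_pmod. Qed.

Lemma cpark_rot m k r (occ : seq nat) a :
  all (fun x => x < m.+1) occ -> a < m.+1 ->
  cpark m k (map (rot m r) occ) (rot m r a) = omap (rot m r) (cpark m k occ a).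
Proof.
move=> Ao Ha; rewrite /cpark (mem_map_in (@rot_inj m r) Ao Ha).
case: ifP => // _.
rewrite cback_rot (ffree_map (@rot_inj m r) Ao (all_cback _ _ _)).
case: ffree => //=.
by rewrite cfwd_rot (ffree_map (@rot_inj m r) Ao (all_cfwd _ _)).
Qed.

Lemma crun_rot m k r (occ w : seq nat) :
  all (fun x => x < m.+1) occ -> all (fun x => x < m.+1) w ->
  crun m k (map (rot m r) occ) (map (rot m r) w) = omap (map (rot m r)) (crun m k occ w).
Proof.
elim: w occ => [|a w IH] occ //= Ao /andP[Ha Hw].
rewrite cpark_rot //; case E: cpark => [s|] //=.
have /andP[Hs _] := cpark_range Ha E.
by rewrite -(IH (s :: occ)) //= Hs.
Qed.

Lemma cok_rot m k r (w : seq nat) :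
  r < m.+1 -> all (fun x => x < m.+1) w ->
  cok m k r [::] (map (rot m r) w) = cok m k 0 [::] w.
Proof.
move=> Hr Hw; rewrite /cok.
have := crun_rot k r (isT : all (fun x => x < m.+1) [::]) Hw; rewrite /= => ->.
case E: crun => [o|] //=.
have [_ _ Ho] := crun_props (isT : uniq [::]) Hw E.
have Ao : all (fun x => x < m.+1) o by apply/allP => x /Ho.
have Hr0 : rot m r 0 = r by rewrite /rot add0n modn_small.
by rewrite -{1}Hr0 (mem_map_in (@rot_inj m r) Ao).
Qed.

Lemma rot_inj' m r x y : x < m.+1 -> y < m.+1 -> rot m r x = rot m r y -> x = y.
Proof. by move=> Hx Hy; apply: (@rot_inj m r). Qed.

Lemma perm_rot m r : perm_eq (map (rot m r) (iota 0 m.+1)) (iota 0 m.+1).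
Proof.
have U : uniq (map (rot m r) (iota 0 m.+1)).
  rewrite map_inj_in_uniq; first exact: iota_uniq.
  move=> x y; rewrite !mem_iota => Hx Hy; apply: rot_inj'; lia.
have S : {subset map (rot m r) (iota 0 m.+1) <= iota 0 m.+1}.
  by move=> x /mapP[y _ ->]; rewrite mem_iota add0n /rot ltn_pmod.
have Sz : size (iota 0 m.+1) <= size (map (rot m r) (iota 0 m.+1)) by rewrite size_map.
have [_ E] := uniq_min_size U S Sz.
by apply: uniq_perm => //; apply: iota_uniq.
Qed.

Lemma count_notin_iota s n (o : seq nat) :
  uniq o -> (forall x, x \in o -> s <= x < s + n) ->
  count (fun x => x \notin o) (iota s n) = n - size o.
Proof.
move=> Uo Ho.
have Hp : perm_eq [seq x <- iota s n | x \in o] o.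
  apply: uniq_perm; rewrite ?filter_uniq ?iota_uniq //.
  move=> x; rewrite mem_filter mem_iota; apply/andP/idP => [[]//|xo].
  by split=> //; apply: Ho.
have h := count_predC (fun x => x \in o) (iota s n).
rewrite -size_filter (perm_size Hp) size_iota in h.
by rewrite -[in RHS]h addKn.
Qed.

Lemma cok_sum m k (w : seq nat) : all (fun x => x < m.+1) w -> size w = m ->
  \sum_(r <- iota 0 m.+1) (cok m k r [::] w : nat) = 1.
Proof.
move=> Hw Sw.
have Sz : size ([::] : seq nat) + size w <= m by rewrite Sw.
have := crun_total k (isT : uniq [::]) isT Hw Sz.
case E: crun => [o|] // _.
have [Uo So Ho] := crun_props (isT : uniq [::]) Hw E.
rewrite /= Sw addn0 in So.
rewrite (eq_bigr (fun r => (r \notin o) : nat)); last by move=> r _; rewrite /cok E.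
rewrite sum_bool_count count_notin_iota // ?So ?subSnn // => x /Ho.
Qed.

Lemma circ_count m k : wcnt (iota 1 m) m (cok m k 0 [::]) = m.+1 ^ m.-1.
Proof.
have X : forall r, r < m.+1 ->
    wcnt (iota 0 m.+1) m (cok m k r [::]) = wcnt (iota 0 m.+1) m (cok m k 0 [::]).
  move=> r Hr; rewrite -(wcnt_perm _ _ (perm_rot m r)) wcnt_map.
  apply: wcnt_ext => w Hw _; rewrite cok_rot //.
  by apply/allP => x /(allP Hw); rewrite mem_iota.
have T : m.+1 ^ m = m.+1 * wcnt (iota 0 m.+1) m (cok m k 0 [::]).
  have := wcnt_const1 (iota 0 m.+1) m; rewrite size_iota => <-.
  rewrite (wcnt_ext (f := fun _ => 1)
              (g := fun w => \sum_(r <- iota 0 m.+1) (cok m k r [::] w : nat))); last first.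
    move=> w Hw Sw; rewrite cok_sum //.
    by apply/allP => x /(allP Hw); rewrite mem_iota.
  rewrite wcnt_sum (eq_big_seq (fun _ => wcnt (iota 0 m.+1) m (cok m k 0 [::]))); last first.
    by move=> r; rewrite mem_iota => Hr; apply: X.
  by rewrite big_const_seq count_predT size_iota iter_addn_0 mulnC.
have R : wcnt (iota 0 m.+1) m (cok m k 0 [::]) = wcnt (iota 1 m) m (cok m k 0 [::]).
  rewrite (@wcnt_sub (fun x => x != 0)).
    congr wcnt; rewrite /= /=; apply/all_filterP/allP => x; rewrite mem_iota; lia.
  move=> w _ _; rewrite /cok; case E: crun => [o|] // H0.
  apply/allP => x xw; apply/eqP => x0; subst x.
  by rewrite (crun_pref xw E) in H0.
rewrite -R; case: m T {X R} => [|m] T.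
  by rewrite /= mul1n in T; rewrite -T.
apply/eqP; rewrite -(eqn_pmul2l (ltn0Sn m.+1)) -T /= -expnS.
by [].
Qed.

Lemma circ_zero m k L : m < L -> wcnt (iota 1 m) L (cok m k 0 [::]) = 0.
Proof.
move=> HL; apply: wcnt_zero => w Hw Sw; rewrite /cok.
case E: crun => [o|] //.
have Hw' : all (fun x => x < m.+1) w.
  by apply/allP => x /(allP Hw); rewrite mem_iota; lia.
have [Uo So Ho] := crun_props (isT : uniq [::]) Hw' E.
case o0: (0 \in o) => //.
have Hsub : {subset o <= iota 1 m}.
  move=> x xo; rewrite mem_iota; have := Ho x xo; rewrite /=.
  case: (eqVneq x 0) => [x0|]; last by lia.
  by rewrite x0 o0 in xo.
have := uniq_leq_size Uo Hsub; rewrite size_iota So /= addn0 Sw.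
by rewrite leqNgt HL.
Qed.


Definition sanit e (x : option nat) :=
  if x is Some s then (if s == e then None else Some (s - e)) else None.
Definition sanit0 (x : option nat) :=
  if x is Some t then (if t == 0 then None else Some t) else None.

Lemma addn_inj_in e : {in predT &, injective (addn e)}.
Proof. by move=> x y _ _ /addnI. Qed.

Lemma ffree_shift e (occ s : seq nat) :
  ffree (map (addn e) occ) (map (addn e) s) = omap (addn e) (ffree occ s).
Proof. by apply: (ffree_map (P := predT)) => //; [apply: addn_inj_in|apply/allP..]. Qed.

Lemma mem_shift e (occ : seq nat) x : (e + x \in map (addn e) occ) = (x \in occ).
Proof. by rewrite mem_map //; apply: addnI. Qed.

Lemma cfwd_split m a : 0 < a <= m ->
  cfwd m a = iota a.+1 (m - a) ++ 0 :: [seq (a + j) %% m.+1 | j <- iota (m - a).+2 (a - 1)].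
Proof.
move=> Ha; rewrite /cfwd (iota_split (x := (m - a).+1)); last by lia.
rewrite map_cat /=; congr (_ ++ _ :: _).
- rewrite (_ : (m - a).+1 - 1 = m - a); last by lia.
  have -> : iota a.+1 (m - a) = map (addn a) (iota 1 (m - a)) by rewrite -iotaDl addn1.
  apply/eq_in_map => j.
  rewrite mem_iota => Hj /=; rewrite modn_small; lia.
- by rewrite (_ : a + (m - a).+1 = m.+1) ?modnn //; lia.
- congr map; congr iota; lia.
Qed.

Lemma sanit_shift e t : 0 < t -> sanit e (Some (e + t)) = Some t.
Proof. by move=> Ht; rewrite /sanit addKn; case: eqP => //; lia. Qed.

Lemma sanit_e e : sanit e (Some e) = None.
Proof. by rewrite /sanit eqxx. Qed.

Lemma sanit0_pos t : 0 < t -> sanit0 (Some t) = Some t.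
Proof. by rewrite /sanit0; case: t. Qed.

Lemma cback_small m k a : 0 < a <= m -> k < a ->
  cback m k a = map (fun j => a - j) (iota 1 k).
Proof.
move=> Ha Hk; apply/eq_in_map => j; rewrite mem_iota => Hj.
rewrite (_ : a + m.+1 * k - j = k * m.+1 + (a - j)); last by nia.
rewrite modnMDl modn_small //; lia.
Qed.

Lemma cback_big m k a : 0 < a <= m -> a <= k ->
  cback m k a = map (fun j => a - j) (iota 1 (a - 1)) ++
                0 :: [seq (a + m.+1 * k - j) %% m.+1 | j <- iota a.+1 (1 + k - a.+1)].
Proof.
move=> Ha Hk; rewrite /cback (iota_split (x := a)); last by lia.
rewrite map_cat /=; congr (_ ++ _ :: _).
- apply/eq_in_map => j; rewrite mem_iota => Hj.
  rewrite (_ : a + m.+1 * k - j = k * m.+1 + (a - j)); last by nia.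
  rewrite modnMDl modn_small //; lia.
- by rewrite addKn modnMr.
Qed.

Lemma lback_shift_small e k a : 0 < e -> 0 < a -> k < a ->
  lback (e + a) k = map (addn e) (map (fun j => a - j) (iota 1 k)).
Proof.
move=> He Ha Hk; rewrite lback_eq (_ : minn k (e + a - 1) = k); last by lia.
rewrite -map_comp; apply/eq_in_map => j; rewrite mem_iota => Hj /=; lia.
Qed.

Lemma lback_shift_big e k a : 0 < e -> 0 < a -> a <= k ->
  exists rest, lback (e + a) k =
     map (addn e) (map (fun j => a - j) (iota 1 (a - 1))) ++ e :: rest.
Proof.
move=> He Ha Hk; rewrite lback_eq (iota_split (x := a)); last by lia.
rewrite map_cat /=; eexists; congr (_ ++ _ :: _).
- rewrite -map_comp; apply/eq_in_map => j; rewrite mem_iota => Hj /=; lia.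
- lia.
Qed.

Lemma lin_circ_car m k e (occ : seq nat) a : 0 < e -> 0 < a <= m -> 0 \notin occ ->
  sanit e (park_car (e + m) k (map (addn e) occ) (e + a)) = sanit0 (cpark m k occ a).
Proof.
move=> He Ha o0; rewrite park_carE /cpark mem_shift.
case: ifP => ao.
  by rewrite /= addKn; do 2 case: eqP => //; lia.
have eo : e \notin map (addn e) occ by rewrite -{1}(addn0 e) mem_shift.
case: (ltnP k a) => Hk.
  rewrite (cback_small Ha Hk) (@lback_shift_small e k a He _ Hk); last by lia.
  rewrite ffree_shift.
  case Eb: (ffree occ _) => [t|] /=.
    move/ffreeP: Eb => /andP[/mapP[j]]; rewrite mem_iota => Hj -> _.
    by rewrite addKn; do 2 case: eqP => //; lia.
  rewrite (cfwd_split Ha) ffree_split //.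
  have -> : iota (e + a).+1 (e + m - (e + a)) = map (addn e) (iota a.+1 (m - a)).
    by rewrite subnDl -addnS iotaDl.
  rewrite ffree_shift.
  case E2: ffree => [t|] /=.
    move/ffreeP: E2 => /andP[]; rewrite mem_iota => Ht _.
    by rewrite /= addKn; do 2 case: eqP => //; lia.
  by [].
have Ha0 : 0 < a by lia.
have [rest ->] := @lback_shift_big e k a He Ha0 Hk.
rewrite (cback_big Ha Hk) !ffree_split // ffree_shift.
case Eb: (ffree occ _) => [t|] /=.
  move/ffreeP: Eb => /andP[/mapP[j]]; rewrite mem_iota => Hj -> _.
  by rewrite /= addKn; do 2 case: eqP => //; lia.
by rewrite eqxx.
Qed.

Lemma cok_cons m k r occ a w :
  cok m k r occ (a :: w) =
  if cpark m k occ a is Some s then cok m k r (s :: occ) w else false.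
Proof. by rewrite /cok /=; case: cpark. Qed.

Lemma lin_circ_run m k e (occ w : seq nat) : 0 < e -> 0 \notin occ ->
  all (fun x => 0 < x <= m) w ->
  okE (e + m) k e (map (addn e) occ) (map (addn e) w) = cok m k 0 occ w.
Proof.
elim: w occ => [|a w IH] occ He o0.
  by move=> _; rewrite /okE /cok /= -{1}(addn0 e) mem_shift.
move=> /= /andP[Ha Hw]; rewrite okE_cons cok_cons.
have key := @lin_circ_car m k e occ a He Ha o0.
have Hbad : forall s, sanit e (Some s) = None ->
    (if Some s is Some s' then okE (e + m) k e (s' :: map (addn e) occ) (map (addn e) w)
     else false) = false.
  move=> s; rewrite /sanit; case: eqP => [-> _|//]; exact: okE_head.
case Ec: (cpark m k occ a) key => [t|] key.
  case: (eqVneq t 0) => [t0|tn0].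
    subst t; rewrite cok_head; move: key; rewrite /=.
    by case: park_car => [s|] // /Hbad.
  move: key; rewrite sanit0_pos ?lt0n //.
  case Ep: park_car => [s|] //; rewrite /sanit; case: eqP => // se [st].
  have -> : s = e + t by lia.
  rewrite (IH (t :: occ)) //; by rewrite in_cons negb_or eq_sym tn0.
move: key; rewrite /=; by case: park_car => [s|] // /Hbad.
Qed.

Lemma right_count m k e L : 0 < e ->
  wcnt (iota e.+1 m) L (okE (e + m) k e [::]) = wcnt (iota 1 m) L (cok m k 0 [::]).
Proof.
move=> He; have -> : iota e.+1 m = map (addn e) (iota 1 m) by rewrite -iotaDl addn1.
rewrite wcnt_map; apply: wcnt_ext => w Hw _.
rewrite -(@lin_circ_run m k e [::] w He) //.
by apply/allP => x /(allP Hw); rewrite mem_iota; lia.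
Qed.


Fixpoint allw (A : seq nat) L : seq (seq nat) :=
  if L is L'.+1 then [seq a :: w | a <- A, w <- allw A L'] else [:: [::]].

Lemma sum_count (T : Type) (P : pred T) s : \sum_(x <- s) (P x : nat) = count P s.
Proof. by elim: s => [|x s IH]; rewrite ?big_nil ?big_cons //= IH. Qed.

Lemma wcnt_allw A L f : wcnt A L f = \sum_(w <- allw A L) f w.
Proof.
elim: L f => [|L IH] f /=; first by rewrite big_seq1.
rewrite big_allpairs_dep /=; apply: eq_bigr => a _; exact: IH.
Qed.

Lemma allw_uniq A L : uniq A -> uniq (allw A L).
Proof.
move=> UA; elim: L => [|L IH] //=.
by apply: allpairs_uniq => // -[a w] [b v] _ _ /= [-> ->].
Qed.

Lemma mem_allw A L w : (w \in allw A L) = (size w == L) && all (fun x => x \in A) w.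
Proof.
elim: L w => [|L IH] w /=; first by rewrite inE; case: w.
apply/allpairsP/idP => [[[a v] /= [aA vL ->]]|].
  by move: vL; rewrite IH /= aA => /andP[/eqP -> ->]; rewrite eqxx.
case: w => [|a v] //= /andP[Hs /andP[aA Hv]]; exists (a, v) => /=.
by rewrite IH Hv aA -(eqSS (size v)) Hs.
Qed.

Lemma size_allw A L : size (allw A L) = size A ^ L.
Proof. by elim: L => [|L IH] //=; rewrite size_allpairs IH expnS. Qed.

Lemma card_wcnt L M (Q : seq nat -> bool) :
  #|[set alpha : {ffun 'I_L -> 'I_M} | Q [seq (alpha i).+1 | i <- enum 'I_L]]| =
  wcnt (iota 1 M) L Q.
Proof.
set tl := fun alpha : {ffun 'I_L -> 'I_M} => [seq (alpha i).+1 | i <- enum 'I_L].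
rewrite cardsE cardE -deprecated_filter_index_enum size_filter.
rewrite -(count_map tl Q) wcnt_allw sum_count.
apply/permP; apply: uniq_perm.
- rewrite map_inj_uniq ?index_enum_uniq // => a1 a2 /eq_in_map H.
  apply/ffunP => i; apply/val_inj; have := H i; rewrite mem_enum => /(_ isT) [].
  by [].
- exact/allw_uniq/iota_uniq.
have Hs : {subset map tl (index_enum {ffun 'I_L -> 'I_M}) <= allw (iota 1 M) L}.
  move=> w /mapP[a _ ->]; rewrite mem_allw size_map size_enum_ord eqxx /=.
  by apply/allP => x /mapP[i _ ->]; rewrite mem_iota; case: (a i) => j /= Hj; lia.
have Hsz : size (allw (iota 1 M) L) <= size (map tl (index_enum {ffun 'I_L -> 'I_M})).
  rewrite size_allw size_iota size_map.
  have -> : size (index_enum {ffun 'I_L -> 'I_M}) = #|{ffun 'I_L -> 'I_M}|.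
    by rewrite cardE -deprecated_filter_index_enum filter_predT.
  by rewrite card_ffun !card_ord.
have U : uniq (map tl (index_enum {ffun 'I_L -> 'I_M})).
  rewrite map_inj_uniq ?index_enum_uniq // => a1 a2 /eq_in_map H.
  apply/ffunP => i; apply/val_inj; have := H i; rewrite mem_enum => /(_ isT) [].
  by [].
by have [_ E] := uniq_min_size U Hs Hsz.
Qed.


Lemma PF_wcnt M k :
  #|PF M k| = wcnt (iota 1 M) M (fun u => park_all M k [::] u != None).
Proof. exact: (card_wcnt M M (fun u => park_all M k [::] u != None)). Qed.

Lemma filter_neq_iota N e : 0 < e <= N ->
  [seq x <- iota 1 N | x != e] = iota 1 e.-1 ++ iota e.+1 (N - e).
Proof.
move=> He; rewrite (iota_split (x := e)); last by lia.
rewrite filter_cat /= eqxx /=.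
rewrite (_ : e - 1 = e.-1); last by lia.
rewrite (_ : 1 + N - e.+1 = N - e); last by lia.
congr (_ ++ _); apply/all_filterP/allP => x; rewrite mem_iota; lia.
Qed.

Lemma left_zero M k i : M < i ->
  wcnt (iota 1 M) i (fun u => park_all M k [::] u != None) = 0.
Proof.
move=> Hi; apply: wcnt_zero => w Hw Sw.
case E: park_all => [o|] //.
have Hw' : all (fun x => 0 < x <= M) w.
  by apply/allP => x /(allP Hw); rewrite mem_iota; lia.
have [Uo So Ho] := run_props (isT : uniq [::]) Hw' E.
have Hsub : {subset o <= iota 1 M}.
  by move=> x /Ho; rewrite mem_iota /=; lia.
have := uniq_leq_size Uo Hsub; rewrite size_iota So /= addn0 Sw.
by rewrite leqNgt Hi.
Qed.

Lemma W_eq n k e : 0 < e <= n.+1 ->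
  wcnt (iota 1 n.+1) n (okE n.+1 k e [::]) =
  'C(n, e.-1) * #|PF e.-1 k| * (n.+1 - e).+1 ^ (n.+1 - e).-1.
Proof.
move=> He.
rewrite (@wcnt_sub (fun x => x != e)); last first.
  move=> w Hw _; rewrite /okE; case E: park_all => [o|] // H.
  apply/allP => x xw; apply/eqP => xe; subst x.
  by rewrite (run_pref xw E) in H.
rewrite filter_neq_iota //.
rewrite (wcnt_ext (g := fun w => okE n.+1 k e [::] [seq x <- w | x \in iota 1 e.-1] *
                          okE n.+1 k e [::] [seq x <- w | x \in iota e.+1 (n.+1 - e)]));
  last first.
  move=> w Hw _.
  have Hw' : all (fun x => (0 < x <= n.+1) && (x != e)) w.
    by apply/allP => x /(allP Hw); rewrite mem_cat !mem_iota; lia.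
  rewrite (@split_sim n.+1 k e [::] [::] [::] w) //.
  have -> : [seq x <- w | x \in iota 1 e.-1] = [seq x <- w | x < e].
    by apply: eq_in_filter => x /(allP Hw); rewrite mem_cat !mem_iota; lia.
  have -> : [seq x <- w | x \in iota e.+1 (n.+1 - e)] = [seq x <- w | e < x].
    by apply: eq_in_filter => x /(allP Hw); rewrite mem_cat !mem_iota; lia.
  by case: okE; case: okE.
rewrite (@wcnt_shuffle _ _ _ (fun u => okE n.+1 k e [::] u : nat) (fun u => okE n.+1 k e [::] u : nat)); last by move=> x; rewrite !mem_iota; lia.
have He0 : 0 < e by lia.
have R : forall j, wcnt (iota e.+1 (n.+1 - e)) j (okE n.+1 k e [::]) =
                   wcnt (iota 1 (n.+1 - e)) j (cok (n.+1 - e) k 0 [::]).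
  move=> j; have := @right_count (n.+1 - e) k e j He0.
  by rewrite subnKC //; case/andP: He.
have L1 : forall i, wcnt (iota 1 e.-1) i (okE n.+1 k e [::]) =
                    wcnt (iota 1 e.-1) i (fun u => park_all e.-1 k [::] u != None).
  move=> i; apply: wcnt_ext => w Hw _; rewrite (@left_trunc n.+1 k e [::] w) //.
  by apply/allP => x /(allP Hw); rewrite mem_iota; lia.
have Hi : e.-1 < n.+1 by lia.
rewrite (bigD1 (Ordinal Hi)) //= big1 ?addn0; last first.
  move=> i /eqP Hne.
  have Hne' : (i : nat) <> e.-1 by move=> H; apply: Hne; apply: val_inj.
  case: (ltngtP i e.-1) => [lt|gt|//].
    rewrite R circ_zero ?muln0 //; lia.
  by rewrite L1 left_zero ?muln0 ?mul0n.
rewrite L1 -PF_wcnt R (_ : n - e.-1 = n.+1 - e); last by lia.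
by rewrite circ_count.
Qed.

Unset Implicit Arguments.

Theorem theorem1p1 (n k : nat) (Hn : 1 <= n) (Hk : k <= n - 1) :
  #|PF n.+1 k| =
  \sum_(0 <= i < n.+1)
     'C(n, i) * minn (i.+1 + k) n.+1 * #|PF i k| * (n - i + 1) ^ (n - i - 1).
Proof.
rewrite PF_wcnt wcnt_rcons.
rewrite (wcnt_ext (g := fun b => \sum_(e <- iota 1 n.+1)
                               okE n.+1 k e [::] b * minn (e + k) n.+1)); last first.
  move=> w Hw Sw; rewrite beta_sum //.
  by apply/allP => x /(allP Hw); rewrite mem_iota; lia.
rewrite wcnt_sum.
rewrite (eq_big_seq (fun e => minn (e + k) n.+1 *
            ('C(n, e.-1) * #|PF e.-1 k| * (n.+1 - e).+1 ^ (n.+1 - e).-1))); last first.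
  move=> e; rewrite mem_iota => He.
  rewrite (wcnt_ext (g := fun b => minn (e + k) n.+1 * okE n.+1 k e [::] b)); last first.
    by move=> w _ _; rewrite mulnC.
  rewrite wcnt_mull W_eq //; lia.
rewrite /index_iota subn0 (_ : iota 1 n.+1 = map succn (iota 0 n.+1)); last first.
  by rewrite -(iotaDl 1 0) add1n.
rewrite big_map; apply: eq_bigr => i _ /=.
rewrite subSS addn1 subn1.
rewrite mulnA [minn _ _ * _]mulnC -!mulnA.
by congr (_ * _); rewrite mulnCA.
Qed.
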